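(* Let $c=(c_1,\dots,c_{n-1})$ be a cubic coordinate of size $n$ and let $i\in[n-1]$ with $c_i\neq 0$. Let $c'$ be the $(n-1)$-tuple with $c'_i=0$ and $c'_j=c_j$ for all $j\neq i$. Then $c'$ is a cubic coordinate.
   Context: A Tamari diagram of size $n$ is a word $u=u_1\cdots u_n$ of integers with $0\leq u_i\leq n-i$ and $u_{i+j}\leq u_i-j$ for all $i\in[n]$, $0\leq j\leq u_i$. A dual Tamari diagram of size $n$ is a word $v$ of integers with $0\leq v_i\leq i-1$ and $v_{i-j}\leq v_i-j$ for all $i\in[n]$, $0\leq j\leq v_i$. $(u,v)$ is a Tamari interval diagram if moreover for all $1\leq i<j\leq n$ with $j-i\leq u_i$ one has $v_j<j-i$. A cubic coordinate of size $n$ is $c\in\mathbb{Z}^{n-1}$ such that $(u,v)$ with $u_i=\max(c_i,0)$ ($i\in[n-1]$), $u_n=0$, $v_1=0$, $v_i=|\min(c_{i-1},0)|$ ($2\leq i\leq n$) is a Tamari interval diagram. *)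

(* Defs.v *)
From mathcomp Require Import all_boot all_order all_algebra.
Set Implicit Arguments. Unset Strict Implicit. Unset Printing Implicit Defensive.
Import Order.TTheory GRing.Theory Num.Theory.

(* Words are 1-indexed: a word w of size n is a function nat -> nat,
   only the values w 1, ..., w n matter. *)

Definition tamari_diagram (n : nat) (u : nat -> nat) : Prop :=
  forall i, 1 <= i <= n ->
    (u i <= n - i)%N /\ (forall j, j <= u i -> u (i + j) <= u i - j)%N.

Definition dual_tamari_diagram (n : nat) (v : nat -> nat) : Prop :=
  forall i, 1 <= i <= n ->
    (v i <= i - 1)%N /\ (forall j, j <= v i -> v (i - j) <= v i - j)%N.

Definition tamari_interval_diagram (n : nat) (u v : nat -> nat) : Prop :=
  [/\ tamari_diagram n u, dual_tamari_diagram n v &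
      forall i j, 1 <= i -> i < j -> j <= n -> (j - i <= u i)%N -> (v j < j - i)%N].

Definition cubic_entry (c : seq int) (i : nat) : int := nth 0%R c i.-1.

Definition cubic_u (n : nat) (c : seq int) (i : nat) : nat :=
  if (i < n)%N then `|Num.max (cubic_entry c i) 0%R|%N else 0%N.

Definition cubic_v (c : seq int) (i : nat) : nat :=
  if i == 1%N then 0%N else `|Num.min (cubic_entry c i.-1) 0%R|%N.

Definition cubic_coordinate (n : nat) (c : seq int) : Prop :=
  size c = n.-1 /\ tamari_interval_diagram n (cubic_u n c) (cubic_v c).

(* Main.v *)
Require Import Defs.
From mathcomp Require Import all_boot all_order all_algebra.

Lemma tid_shrink n u v u' v' :
  tamari_interval_diagram n u v ->
  (forall k, u' k = u k \/ u' k = 0%N) ->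
  (forall k, v' k = v k \/ v' k = 0%N) ->
  tamari_interval_diagram n u' v'.
Proof.
move=> [Hu Hv Hi] Eu Ev.
have Lu k : (u' k <= u k)%N by case: (Eu k) => ->.
have Lv k : (v' k <= v k)%N by case: (Ev k) => ->.
split.
- move=> k Hk; have [H1 H2] := Hu k Hk; split; first exact: leq_trans (Lu k) H1.
  move=> j Hj; case: (Eu k) => E.
  + rewrite E; apply: leq_trans (Lu _) (H2 j _); by rewrite -E.
  + move: Hj; rewrite E leqn0 => /eqP ->; by rewrite addn0 E.
- move=> k Hk; have [H1 H2] := Hv k Hk; split; first exact: leq_trans (Lv k) H1.
  move=> j Hj; case: (Ev k) => E.
  + rewrite E; apply: leq_trans (Lv _) (H2 j _); by rewrite -E.
  + move: Hj; rewrite E leqn0 => /eqP ->; by rewrite subn0 E.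
- move=> a b H1 H2 H3 H4; apply: leq_ltn_trans (Lv b) _.
  exact: Hi H1 H2 H3 (leq_trans H4 (Lu a)).
Qed.

Theorem lemma2p3 (n : nat) (c : seq int) (i : nat) :
  cubic_coordinate n c -> (1 <= i <= n.-1)%N -> cubic_entry c i != 0%R ->
  cubic_coordinate n (seq.set_nth 0%R c i.-1 0%R).
Proof.
move=> [Hs Ht] /andP [Hi1 Hi2] _.
have E k : cubic_entry (set_nth 0%R c i.-1 0%R) k = cubic_entry c k \/
           cubic_entry (set_nth 0%R c i.-1 0%R) k = 0%R.
  rewrite /cubic_entry nth_set_nth /=; case: ifP => _; by [right | left].
split.
  rewrite size_set_nth Hs; apply/maxn_idPr.
  by rewrite prednK // (leq_trans Hi1 Hi2).
apply: tid_shrink Ht _ _.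
- move=> k; rewrite /cubic_u; case: ifP => _; last by left.
  case: (E k) => ->; by [left | right].
- move=> k; rewrite /cubic_v; case: ifP => _; first by left.
  case: (E k.-1) => ->; by [left | right].
Qed.
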